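(* For every $g\in\mathbb R$ and all $\eta,\zeta\in\mathcal F^{\mathcal S}$, \[ \ell_{\mathrm C,\infty}(\mathcal T_g\eta,\mathcal T_g\zeta)\le\ell_{\mathrm C,\infty}(\eta,\zeta). \]
   Context: Finite state set $\mathcal S=\{1,\dots,m\}$ and transition matrix $P=(P_{ij})$ on $\mathcal S$ (induced by a fixed policy in a finite MDP). $R_{ij}$ is the finite-valued $[0,1]$-valued random one-step reward conditioned on transition $i\to j$; for $g\in\mathbb R$, $\nu^{(g)}_{ij}:=\mathrm{Law}(R_{ij}-g)$. $\mathcal F^{\mathcal S}$ is the set of families $\eta=(\eta_i)_{i\in\mathcal S}$ of probability laws on $\mathbb R$ with finite second moment, and $(\mathcal T_g\eta)_i:=\sum_jP_{ij}(\nu^{(g)}_{ij}\ast\eta_j)$. Cramér distance $\ell_{\mathrm C}(\eta,\zeta):=(\int_{\mathbb R}(F_\eta-F_\zeta)^2\,\mathrm dx)^{1/2}$ with $F$ the cdfs, and $\ell_{\mathrm C,\infty}(\eta,\zeta):=\max_i\ell_{\mathrm C}(\eta_i,\zeta_i)$. *)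

(* Defs.v *)
From HB Require Import structures.
From mathcomp Require Import all_boot all_order all_algebra.
From mathcomp Require Import all_classical all_reals all_analysis.
Set Implicit Arguments. Unset Strict Implicit. Unset Printing Implicit Defensive.
Import Order.TTheory GRing.Theory Num.Theory.
Local Open Scope classical_set_scope.
Local Open Scope ring_scope.

Section Defs.
Variable R : realType.

Definition cdfR (mu : set R -> \bar R) (x : R) : R := fine (mu `]-oo, x]%classic).

Definition cramer (mu nu : set R -> \bar R) : \bar R :=
  sqrte (\int[lebesgue_measure]_x (((cdfR mu x - cdfR nu x) ^+ 2)%:E))%E.

Definition cramer_inf (m : nat) (eta zeta : 'I_m -> set R -> \bar R) : \bar R :=
  (\big[maxe/0%E]_(i < m) cramer (eta i) (zeta i))%E.

Definition shift_law (nu : set R -> \bar R) (g : R) : set R -> \bar R :=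
  pushforward nu (fun r => r - g).

Definition conv (mu nu : set R -> \bar R) : set R -> \bar R :=
  pushforward (mu \x nu)%E (fun p : R * R => p.1 + p.2).

(* distributional Bellman operator T_g; nu i j is the law of R_ij *)
Definition Tg (m : nat) (P : 'M[R]_m) (nu : 'I_m -> 'I_m -> set R -> \bar R)
  (g : R) (eta : 'I_m -> set R -> \bar R) : 'I_m -> set R -> \bar R :=
  fun i A => (\sum_(j < m) (P i j)%:E * conv (shift_law (nu i j) g) (eta j) A)%E.

Definition finite_second_moment (mu : probability R R) : Prop :=
  (\int[mu]_x ((x ^+ 2)%:E) < +oo)%E.

Definition finite_01_law (mu : probability R R) : Prop :=
  exists s : seq R, all (fun r => (0 <= r <= 1)) s /\ mu [set x | x \in s] = 1%E.

Definition stochastic (m : nat) (P : 'M[R]_m) : Prop :=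
  (forall i j, 0 <= P i j) /\ (forall i, \sum_(j < m) P i j = 1).

End Defs.

(* Main.v *)
Require Import Defs.
From HB Require Import structures.
From mathcomp Require Import all_boot all_order all_algebra.
From mathcomp Require Import all_classical all_reals all_analysis.
From mathcomp Require Import measurable_realfun.
Import Order.TTheory GRing.Theory Num.Theory.
Local Open Scope classical_set_scope.
Local Open Scope ring_scope.
From mathcomp Require Import ring lra.
Section S0.
Variable R : realType.
Local Notation leb := (@lebesgue_measure R).
Lemma mshift (c : R) : measurable_fun [set: R] (fun x : R => x + c).
Proof. by apply: measurable_realfun.measurable_funD => //; exact: measurable_cst. Qed.
Lemma leb_shift_set (c : R) (A : set (measurableTypeR R)) : measurable A ->
  pushforward leb ((fun x : R => x + c) : _ -> measurableTypeR R) A = leb A.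
Proof.
move=> mA; apply/esym/lebesgue_measure_unique => //=.
  exact: mshift.
move=> _ _ [[a b]] _ <-.
  rewrite /pushforward.
  have -> : (fun x : R => x + c) @^-1` `]a, b]%classic = `]a - c, b - c]%classic.
    by apply/seteqP; split => x /=; rewrite !in_itv /= ltrBlDr lerBrDr.
  rewrite !lebesgue_measure_itv /= !lte_fin ltrD2r.
  by case: ifP => // _; rewrite -!EFinD opprB addrA subrK.
Qed.

Lemma leb_shift (c : R) (f : R -> \bar R) : measurable_fun [set: R] f ->
  (forall x, (0 <= f x)%E) ->
  (\int[leb]_x f (x + c)%R = \int[leb]_x f x)%E.
Proof.
move=> mf f0.
pose phi := ((fun x : R => x + c) : measurableTypeR R -> measurableTypeR R).
transitivity (\int[pushforward leb phi]_x f x)%E.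
  by rewrite (@ge0_integral_pushforward _ _ _ _ R phi (mshift c) leb setT f measurableT mf).
apply: eq_measure_integral.
  exact: mshift.
intros mphi A mA _; exact: (@leb_shift_set c A mA).
Qed.

End S0.

Section S1.
Variable R : realType.
Local Open Scope ereal_scope.

Lemma cdf_fin (eta : probability R R) (x : R) :
  eta `]-oo, x]%classic = (cdfR eta x)%:E.
Proof.
rewrite /cdfR fineK // ge0_fin_numE //.
by rewrite (le_lt_trans (probability_le1 _ _)) ?ltry.
Qed.

Lemma cdf_ge0 (eta : probability R R) (x : R) : (0 <= cdfR eta x)%R.
Proof. by rewrite -lee_fin -cdf_fin. Qed.

Lemma cdf_nd (eta : probability R R) : {homo cdfR eta : x y / (x <= y)%R}.
Proof.
move=> x y xy; rewrite -lee_fin -!cdf_fin; apply: le_measure; rewrite ?inE //.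
by move=> z /=; rewrite !in_itv /= => /le_trans; apply.
Qed.

Lemma cdf_meas (eta : probability R R) : measurable_fun [set: R] (cdfR eta).
Proof. apply: nondecreasing_measurable => //; exact: cdf_nd. Qed.

Lemma bigsetU_set1 (t : seq R) :
  \big[setU/set0]_(r <- t) [set r] = [set x | x \in t].
Proof.
elim: t => [|h t IH]; first by rewrite big_nil; apply/seteqP; split => x //=; rewrite in_nil.
rewrite big_cons IH; apply/seteqP; split => x /=; rewrite in_cons.
  by case=> [->|->]; rewrite ?eqxx ?orbT.
by case/orP => [/eqP ->|xt]; [left|right].
Qed.

Lemma fin_supp_int (nu : probability R R) (s : seq R) (f : R -> R) :
  nu [set x | x \in s] = 1 -> measurable_fun [set: R] f -> (forall x, (0 <= f x)%R) ->
  \int[nu]_x (f x)%:E = (\sum_(r <- undup s) fine (nu [set r]) * f r)%R%:E.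
Proof.
move=> hs mf f0.
set S := \big[setU/set0]_(r <- undup s) [set r].
have SE : S = [set x | x \in s].
  by rewrite /S bigsetU_set1; apply/seteqP; split => x /=; rewrite mem_undup.
have mS : measurable S by apply: bigsetU_measurable => r _; exact: measurable_set1.
have mfE : measurable_fun [set: R] (fun x => (f x)%:E) by exact/measurable_EFinP.
have nuC : nu (~` S) = 0.
  rewrite -setTD measureD //=; last by rewrite (le_lt_trans (probability_le1 _ _)) ?ltry.
  by rewrite probability_setT setTI SE hs subee.
rewrite (@ge0_negligible_integral _ _ _ nu setT (~` S)) //; last 2 first.
  exact: measurableC.
  by move=> x _; rewrite lee_fin.
rewrite setDE setCK setTI /S ge0_integral_bigsetU //; last 4 first.
- exact: undup_uniq.
- by move=> i j _ _ /= [x [-> ->]].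
- exact: measurable_funS mfE.
- by move=> x _; rewrite lee_fin.
rewrite -sumEFin; apply: eq_bigr => r _.
rewrite (eq_integral (fun _ => (f r)%:E)); last by move=> x; rewrite inE /= => ->.
rewrite integral_cst //= EFinM muleC fineK //.
by rewrite ge0_fin_numE // (le_lt_trans (probability_le1 _ _)) ?ltry.
Qed.

Lemma fin_supp_w1 (nu : probability R R) (s : seq R) :
  nu [set x | x \in s] = 1 -> (\sum_(r <- undup s) fine (nu [set r]) = 1)%R.
Proof.
move=> hs; have := @fin_supp_int nu s (fun _ => 1%R) hs (measurable_cst _) (fun _ => ler01).
rewrite integral_cst //= probability_setT mule1.
under eq_bigr do rewrite mulr1.
by move=> [].
Qed.

Lemma w_ge0 (nu : probability R R) (r : R) : (0 <= fine (nu [set r]))%R.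
Proof. by apply: fine_ge0. Qed.

Lemma conv_cdf (nu eta : probability R R) (g x : R) :
  Defs.conv (shift_law nu g) eta `]-oo, x]%classic =
  \int[nu]_r (cdfR eta (x - (r - g)))%:E.
Proof.
rewrite /Defs.conv /pushforward /product_measure1 /shift_law.
rewrite (eq_integral (fun y : R => (cdfR eta (x - y)%R)%:E)); last first.
  move=> y _ /=; rewrite -cdf_fin; congr (eta _).
  apply/seteqP; split => z /=; rewrite /xsection /= inE /= !in_itv /=.
    by rewrite lerBrDl.
  by rewrite lerBrDl.
have mphi : measurable_fun [set: R] (fun r : R => r - g)%R.
  by apply: measurable_realfun.measurable_funD => //; exact: measurable_cst.
have mh : measurable_fun [set: R] (fun y : R => (cdfR eta (x - y)%R)%:E).
  apply/measurable_EFinP; apply: measurableT_comp; first exact: cdf_meas.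
  by apply: measurable_realfun.measurable_funD => //; exact: measurable_cst.
2: by apply: measurable_realfun.measurable_funD => //; exact: measurable_cst.
intros Hyp0.
rewrite (ge0_integral_pushforward mphi) //.
by move=> y _; rewrite lee_fin cdf_ge0.
Qed.

End S1.

Section S2.
Variable R : realType.
Lemma jensen_seq (I : Type) (s : seq I) (a y : I -> R) :
  (forall i, 0 <= a i) -> \sum_(i <- s) a i = 1 ->
  (\sum_(i <- s) a i * y i) ^+ 2 <= \sum_(i <- s) a i * y i ^+ 2.
Proof.
move=> a0 a1; set M := \sum_(i <- s) a i * y i.
have H : 0 <= \sum_(i <- s) a i * (y i - M) ^+ 2.
  by apply: sumr_ge0 => i _; rewrite mulr_ge0 // sqr_ge0.
have E : \sum_(i <- s) a i * (y i - M) ^+ 2 =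
   \sum_(i <- s) a i * y i ^+ 2 - (M *+ 2) * M + M ^+ 2 * \sum_(i <- s) a i.
  rewrite /M mulr_sumr mulr_sumr -sumrB -big_split /=.
  by apply: eq_bigr => i _; ring.
by move: H; rewrite E a1 mulr1 -subr_ge0; lra.
Qed.
Local Notation leb := (@lebesgue_measure R).

Lemma int_sum_bound (I : Type) (s : seq I) (c : I -> R) (F : I -> R -> R) (B : \bar R) :
  (forall i, 0 <= c i) -> \sum_(i <- s) c i = 1 ->
  (forall i, measurable_fun [set: R] (F i)) ->
  (forall i, (\int[leb]_x ((F i x) ^+ 2)%:E <= B)%E) ->
  (\int[leb]_x ((\sum_(i <- s) c i * F i x) ^+ 2)%:E <= B)%E.
Proof.
move=> c0 c1 mF hB.
have mFi : forall i, measurable_fun [set: R] (fun x => (c i * F i x ^+ 2)%:E).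
  move=> i; apply/measurable_EFinP; apply: measurable_realfun.measurable_funM.
    exact: measurable_cst.
  exact: measurable_funX.
apply: (@le_trans _ _ (\int[leb]_x (\sum_(i <- s) (c i * F i x ^+ 2)%:E))%E).
  apply: ge0_le_integral => //.
  - by move=> x _; rewrite lee_fin sqr_ge0.
  - apply/measurable_EFinP; apply: measurable_funX.
    apply: measurable_sum => i; apply: measurable_realfun.measurable_funM => //.
    exact: mF.
  - exact: emeasurable_sum.
  - by move=> x _; rewrite sumEFin lee_fin; apply: jensen_seq.
rewrite ge0_integral_sum //; last first.
  by move=> i x _; rewrite lee_fin mulr_ge0 // sqr_ge0.
apply: (@le_trans _ _ (\sum_(i <- s) ((c i)%:E * B))%E).
  apply: lee_sum => i _.
  under eq_integral do rewrite EFinM.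
  rewrite ge0_integralZl_EFin //.
  - by apply: lee_wpmul2l; [rewrite lee_fin|exact: hB].
  - by move=> x _; rewrite lee_fin sqr_ge0.
  - by apply/measurable_EFinP; apply: measurable_funX; exact: mF.
by rewrite -ge0_sume_distrl ?sumEFin ?c1 ?mul1e // => i _; rewrite lee_fin.
Qed.
End S2.

Lemma cdf_Tg (R : realType) (m : nat) (P : 'M[R]_m)
  (nu : 'I_m -> 'I_m -> probability R R) (s : 'I_m -> 'I_m -> seq R)
  (hs : forall i j, nu i j [set x | x \in s i j] = 1%E) (g : R)
  (eta : 'I_m -> probability R R) i x :
  cdfR (Tg P (fun i j => nu i j) g (fun i => eta i) i) x =
  \sum_(j < m) P i j * \sum_(r <- undup (s i j))
      fine (nu i j [set r]) * cdfR (eta j) (x - (r - g)).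
Proof.
have E j : ((P i j)%:E * Defs.conv (shift_law (nu i j) g) (eta j) `]-oo, x]%classic)%E =
   (P i j * \sum_(r <- undup (s i j)) fine (nu i j [set r]) * cdfR (eta j) (x - (r - g)))%:E.
  rewrite conv_cdf (@fin_supp_int _ _ _ _ (hs i j)) -?EFinM //.
    apply: measurableT_comp; first exact: cdf_meas.
    apply: measurable_realfun.measurable_funB; first exact: measurable_cst.
    apply: measurable_realfun.measurable_funB => //; exact: measurable_cst.
  by move=> r; exact: cdf_ge0.
by rewrite /cdfR /Tg (eq_bigr _ (fun j _ => E j)) sumEFin.
Qed.
Theorem lemma3 (R : realType) (m : nat) (P : 'M[R]_m)
  (nu : 'I_m -> 'I_m -> probability R R)
  (hP : stochastic P) (hnu : forall i j, finite_01_law (nu i j))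
  (g : R) (eta zeta : 'I_m -> probability R R)
  (heta : forall i, finite_second_moment (eta i))
  (hzeta : forall i, finite_second_moment (zeta i)) :
  (cramer_inf (Tg P (fun i j => nu i j) g (fun i => eta i))
              (Tg P (fun i j => nu i j) g (fun i => zeta i))
   <= cramer_inf (fun i => eta i) (fun i => zeta i))%E.
Proof.
have [s hs] : exists s : 'I_m -> 'I_m -> seq R,
    forall i j, nu i j [set x | x \in s i j] = 1%E.
  exists (fun i j => projT1 (cid (hnu i j))) => i j.
  exact: (projT2 (cid (hnu i j))).2.
set RHS := cramer_inf (fun i => eta i) (fun i => zeta i).
have RHS0 : (0 <= RHS)%E by exact: bigmax_ge_id.
have IB j : (\int[lebesgue_measure]_x ((cdfR (eta j) x - cdfR (zeta j) x) ^+ 2)%:E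
    <= RHS ^+ 2)%E.
  rewrite -(@sqr_sqrte _ (\int[lebesgue_measure]_x ((cdfR (eta j) x - cdfR (zeta j) x) ^+ 2)%:E)); last first.
    by apply: integral_ge0 => x _; rewrite lee_fin sqr_ge0.
  rewrite lee_sqr ?sqrte_ge0 //.
  exact: (le_bigmax _ (fun j => cramer (eta j) (zeta j)) j).
apply: bigmax_le => // i _.
rewrite /cramer.
apply: (@le_trans _ _ (sqrte (RHS ^+ 2))); last by rewrite sqrte_sqr gee0_abs.
rewrite lee_sqrt ?sqre_ge0 //.
have D x : cdfR (Tg P (fun i j => nu i j) g (fun i => eta i) i) x -
           cdfR (Tg P (fun i j => nu i j) g (fun i => zeta i) i) x =
  \sum_(j < m) P i j * \sum_(r <- undup (s i j)) fine (nu i j [set r]) *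
     (cdfR (eta j) (x - (r - g)) - cdfR (zeta j) (x - (r - g))).
  rewrite !(@cdf_Tg R m P nu s hs g) -sumrB; apply: eq_bigr => j _.
  rewrite -mulrBr -sumrB; congr (_ * _); apply: eq_bigr => r _.
  by rewrite mulrBr.
under eq_integral => x _ do rewrite D.
have mh j : measurable_fun [set: R] (fun x => cdfR (eta j) x - cdfR (zeta j) x).
  by apply: measurable_realfun.measurable_funB; exact: cdf_meas.
have mhs j r : measurable_fun [set: R]
    (fun x => cdfR (eta j) (x - (r - g)) - cdfR (zeta j) (x - (r - g))).
  apply: (measurableT_comp (mh j)).
  apply: measurable_realfun.measurable_funB => //; exact: measurable_cst.
apply: int_sum_bound.
- by move=> j; exact: (hP.1 i j).
- exact: (hP.2 i).
- move=> j; apply: measurable_sum => r.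
  apply: measurable_realfun.measurable_funM => //; exact: measurable_cst.
move=> j; apply: int_sum_bound.
- by move=> r; exact: w_ge0.
- exact: fin_supp_w1.
- exact: mhs.
move=> r.
have mf : measurable_fun [set: R] (fun y => ((cdfR (eta j) y - cdfR (zeta j) y) ^+ 2)%:E).
  by apply/measurable_EFinP; exact: measurable_funX.
have := @leb_shift R (- (r - g)) _ mf (fun y => sqr_ge0 _).
move=> ->.
exact: IB.
Qed.
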